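(* Let $(\mathcal{B}_1,\mathcal{B}_0)$ be a Rota-Baxter operator on a crossed module of Lie groups $(H,G,t,\Phi)$. Let $G\ltimes_\Phi H$ be the semi-direct product Lie group $G\times H$ with product $(a,p)\cdot_\Phi(b,q)=(ab,\ p\,\Phi(a)q)$. Define $\mathcal{B}:G\ltimes_\Phi H\to G\ltimes_\Phi H$ by $$\mathcal{B}(a,p)=\Big(\mathcal{B}_0(a),\ \Phi(\mathcal{B}_0(a))\,\mathcal{B}_1\big(\Phi(\mathcal{B}_0(a)^{-1}a^{-1})p\big)\Big),\qquad a\in G,\ p\in H.$$ Then $\mathcal{B}$ is a Rota-Baxter operator on the Lie group $(G\ltimes_\Phi H,\cdot_\Phi)$.
   Context: A crossed module of Lie groups is a quadruple $(H,G,t,\Phi)$ where $H,G$ are Lie groups, $t:H\to G$ is a Lie group homomorphism and $\Phi:G\to\mathrm{Aut}(H)$ is a smooth action of $G$ on $H$ by automorphisms such that $\Phi(t(p))q=pqp^{-1}$ and $t(\Phi(a)p)=a\,t(p)\,a^{-1}$ for all $p,q\in H$, $a\in G$. A Rota-Baxter operator on a Lie group $G$ is a smooth map $\mathcal{B}:G\to G$ with $\mathcal{B}(a)\mathcal{B}(b)=\mathcal{B}(a\mathcal{B}(a)b\mathcal{B}(a)^{-1})$ for all $a,b\in G$. A Rota-Baxter operator on a crossed module of Lie groups $(H,G,t,\Phi)$ is a pair $(\mathcal{B}_1,\mathcal{B}_0)$ of smooth maps $\mathcal{B}_1:H\to H$, $\mathcal{B}_0:G\to G$ such that (i) $\mathcal{B}_1,\mathcal{B}_0$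 are Rota-Baxter operators on $H$, $G$; (ii) $t\circ\mathcal{B}_1=\mathcal{B}_0\circ t$; (iii) $\Phi(\mathcal{B}_0(a))\mathcal{B}_1(p)=\mathcal{B}_1\big(\Phi(a\mathcal{B}_0(a))(p\mathcal{B}_1(p))\cdot\Phi(\mathcal{B}_0(a))\mathcal{B}_1(p)^{-1}\big)$ for all $a\in G,p\in H$. *)

(* Defs.v *)
(* Plain Rocq (no library needed): abstract (possibly infinite) groups given by
   their operations and axioms.  Smoothness is not formalized. *)

Record group_str (T : Type) := GroupStr {
  gmul : T -> T -> T;
  ginv : T -> T;
  gone : T;
  gmulA : forall x y z, gmul x (gmul y z) = gmul (gmul x y) z;
  gmul1l : forall x, gmul gone x = x;
  gmul1r : forall x, gmul x gone = x;
  gmulVl : forall x, gmul (ginv x) x = gone;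
  gmulVr : forall x, gmul x (ginv x) = gone
}.
Arguments gmul {T} g _ _.
Arguments ginv {T} g _.
Arguments gone {T} g.

Definition is_group_hom {H G : Type} (gH : group_str H) (gG : group_str G)
  (t : H -> G) : Prop :=
  forall p q, t (gmul gH p q) = gmul gG (t p) (t q).

(* Phi : G -> Aut(H) is an action of G on H by automorphisms
   (Phi a is a homomorphism, Phi 1 = id, Phi (ab) = Phi a o Phi b;
   in particular each Phi a is bijective with inverse Phi (a^-1)). *)
Definition is_action_by_aut {H G : Type} (gH : group_str H) (gG : group_str G)
  (Phi : G -> H -> H) : Prop :=
  (forall a, is_group_hom gH gH (Phi a)) /\
  (forall p, Phi (gone gG) p = p) /\
  (forall a b p, Phi (gmul gG a b) p = Phi a (Phi b p)).

Definition crossed_module {H G : Type} (gH : group_str H) (gG : group_str G)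
  (t : H -> G) (Phi : G -> H -> H) : Prop :=
  is_group_hom gH gG t /\ is_action_by_aut gH gG Phi /\
  (forall p q, Phi (t p) q = gmul gH (gmul gH p q) (ginv gH p)) /\
  (forall a p, t (Phi a p) = gmul gG (gmul gG a (t p)) (ginv gG a)).

Definition rota_baxter {G : Type} (gG : group_str G) (B : G -> G) : Prop :=
  forall a b, gmul gG (B a) (B b) =
    B (gmul gG (gmul gG (gmul gG a (B a)) b) (ginv gG (B a))).

Definition rota_baxter_cm {H G : Type} (gH : group_str H) (gG : group_str G)
  (t : H -> G) (Phi : G -> H -> H) (B1 : H -> H) (B0 : G -> G) : Prop :=
  rota_baxter gH B1 /\ rota_baxter gG B0 /\
  (forall p, t (B1 p) = B0 (t p)) /\
  (forall a p, Phi (B0 a) (B1 p) =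
     B1 (gmul gH (Phi (gmul gG a (B0 a)) (gmul gH p (B1 p)))
                 (ginv gH (Phi (B0 a) (B1 p))))).

Definition sd_mul {H G : Type} (gH : group_str H) (gG : group_str G)
  (Phi : G -> H -> H) (x y : G * H) : G * H :=
  (gmul gG (fst x) (fst y), gmul gH (snd x) (Phi (fst x) (snd y))).
Definition sd_inv {H G : Type} (gH : group_str H) (gG : group_str G)
  (Phi : G -> H -> H) (x : G * H) : G * H :=
  (ginv gG (fst x), Phi (ginv gG (fst x)) (ginv gH (snd x))).

Definition rota_baxter_sd {H G : Type} (gH : group_str H) (gG : group_str G)
  (Phi : G -> H -> H) (B : G * H -> G * H) : Prop :=
  forall x y, sd_mul gH gG Phi (B x) (B y) =
    B (sd_mul gH gG Phi (sd_mul gH gG Phi (sd_mul gH gG Phi x (B x)) y)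
                        (sd_inv gH gG Phi (B x))).

Definition sd_B {H G : Type} (gH : group_str H) (gG : group_str G)
  (Phi : G -> H -> H) (B1 : H -> H) (B0 : G -> G) (x : G * H) : G * H :=
  let a := fst x in let p := snd x in
  (B0 a, Phi (B0 a) (B1 (Phi (gmul gG (ginv gG (B0 a)) (ginv gG a)) p))).

(* Main.v *)
Require Import Defs.
From Stdlib Require Import Setoid.

Lemma g_idem_one (T : Type) (g : group_str T) (x : T) :
  gmul g x x = x -> x = gone g.
Proof.
  intro E.
  assert (E2 : gmul g (ginv g x) (gmul g x x) = gmul g (ginv g x) x) by (rewrite E; reflexivity).
  rewrite (gmulA T g), (gmulVl T g), (gmul1l T g) in E2. exact E2.
Qed.

Lemma g_inv_uniq (T : Type) (g : group_str T) (x y : T) :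
  gmul g x y = gone g -> x = ginv g y.
Proof.
  intro E. rewrite <- (gmul1r T g x), <- (gmulVr T g y), (gmulA T g), E, (gmul1l T g).
  reflexivity.
Qed.

Lemma g_inv_uniq_r (T : Type) (g : group_str T) (x y : T) :
  gmul g x y = gone g -> y = ginv g x.
Proof.
  intro E. rewrite <- (gmul1l T g y), <- (gmulVl T g x), <- (gmulA T g), E, (gmul1r T g).
  reflexivity.
Qed.

Lemma g_inv_inv (T : Type) (g : group_str T) (x : T) : ginv g (ginv g x) = x.
Proof. symmetry. apply g_inv_uniq. apply gmulVr. Qed.

Lemma gmulKl (T : Type) (g : group_str T) (x y : T) :
  gmul g (ginv g x) (gmul g x y) = y.
Proof. rewrite (gmulA T g), (gmulVl T g), (gmul1l T g). reflexivity. Qed.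

Lemma gmulKr (T : Type) (g : group_str T) (x y : T) :
  gmul g x (gmul g (ginv g x) y) = y.
Proof. rewrite (gmulA T g), (gmulVr T g), (gmul1l T g). reflexivity. Qed.

Lemma g_inv_mul (T : Type) (g : group_str T) (x y : T) :
  ginv g (gmul g x y) = gmul g (ginv g y) (ginv g x).
Proof.
  symmetry. apply g_inv_uniq.
  rewrite <- (gmulA T g), (gmulA T g (ginv g x)), (gmulVl T g), (gmul1l T g), (gmulVl T g).
  reflexivity.
Qed.

Ltac gnorm T g :=
  repeat (rewrite ?(g_inv_mul T g), ?(g_inv_inv T g), <- ?(gmulA T g), ?(gmulVl T g),
     ?(gmulVr T g), ?(gmul1l T g), ?(gmul1r T g), ?(gmulKl T g), ?(gmulKr T g)).

Lemma hom_one (T U : Type) (g : group_str T) (h : group_str U) (f : T -> U) :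
  is_group_hom g h f -> f (gone g) = gone h.
Proof.
  intro Hf. apply g_idem_one. rewrite <- Hf, (gmul1l T g). reflexivity.
Qed.

Lemma hom_inv (T U : Type) (g : group_str T) (h : group_str U) (f : T -> U) x :
  is_group_hom g h f -> f (ginv g x) = ginv h (f x).
Proof.
  intro Hf. apply g_inv_uniq. rewrite <- Hf, (gmulVl T g). apply (hom_one _ _ g h f Hf).
Qed.

Lemma rb_one (T : Type) (g : group_str T) (B : T -> T) :
  rota_baxter g B -> B (gone g) = gone g.
Proof.
  intro R. apply g_idem_one. rewrite R, (gmul1l T g), (gmul1r T g), (gmulVr T g). reflexivity.
Qed.

Lemma rb_inv (T : Type) (g : group_str T) (B : T -> T) (b : T) :
  rota_baxter g B ->
  B (gmul g (gmul g (ginv g (B b)) (ginv g b)) (B b)) = ginv g (B b).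
Proof.
  intro R.
  assert (E : gmul g (B b) (B (gmul g (gmul g (ginv g (B b)) (ginv g b)) (B b))) = gone g).
  { rewrite R.
    rewrite !(gmulA T g), <- (gmulA T g b), (gmulVr T g), (gmul1r T g), (gmulVr T g),
      (gmul1l T g), (gmulVr T g).
    apply rb_one; exact R. }
  apply g_inv_uniq_r. exact E.
Qed.

Theorem theorem2p6 (H G : Type) (gH : group_str H) (gG : group_str G)
  (t : H -> G) (Phi : G -> H -> H) (B1 : H -> H) (B0 : G -> G) :
  crossed_module gH gG t Phi ->
  rota_baxter_cm gH gG t Phi B1 B0 ->
  rota_baxter_sd gH gG Phi (sd_B gH gG Phi B1 B0).
Proof.
  intros [Ht [[Hhom [H1 Hact]] [Hconj Ht2]]] [RB1 [RB0 [HtB Hiii]]].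
  intros [a p] [b q].
  unfold sd_mul, sd_inv, sd_B; simpl.
  assert (Pcomp : forall g h x, Phi g (Phi h x) = Phi (gmul gG g h) x)
    by (intros; rewrite Hact; reflexivity).
  assert (Peq : forall g h x, g = h -> Phi g x = Phi h x) by (intros; subst; reflexivity).
  assert (Pmul : forall g x y, Phi g (gmul gH x y) = gmul gH (Phi g x) (Phi g y))
    by (intros; apply Hhom).
  assert (Pinv : forall g x, Phi g (ginv gH x) = ginv gH (Phi g x))
    by (intros; apply (hom_inv _ _ gH gH); apply Hhom).
  rewrite <- (RB0 a b).
  set (A := B0 a). set (Bb := B0 b).
  set (p' := Phi (gmul gG (ginv gG A) (ginv gG a)) p).
  set (u := B1 p').
  set (q' := Phi (gmul gG (ginv gG Bb) (ginv gG b)) q).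
  set (v := B1 q').
  set (g1 := gmul gG (ginv gG Bb) (ginv gG b)).
  set (Z := gmul gH (gmul gH (Phi g1 (gmul gH p' u)) q') (Phi (ginv gG Bb) (ginv gH u))).
  set (r := gmul gH (gmul gH (gmul gH p (Phi a (Phi A u))) (Phi (gmul gG a A) q))
              (Phi (gmul gG (gmul gG a A) b) (Phi (ginv gG A) (ginv gH (Phi A u))))).
  assert (Hr : Phi (ginv gG (gmul gG a A)) r =
     gmul gH (gmul gH (gmul gH p' u) q) (Phi b (ginv gH u))).
  { unfold r. rewrite !Pmul.
    f_equal; [f_equal; [f_equal|]|].
    - unfold p'. apply Peq. gnorm G gG. reflexivity.
    - rewrite !Pcomp. rewrite (Peq _ (gone gG)); [apply H1|]. gnorm G gG. reflexivity.
    - rewrite !Pcomp. rewrite (Peq _ (gone gG)); [apply H1|]. gnorm G gG. reflexivity.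
    - rewrite <- Pinv, !Pcomp. apply Peq. gnorm G gG. reflexivity. }
  assert (HZ : Phi (gmul gG (ginv gG (gmul gG A Bb))
              (ginv gG (gmul gG (gmul gG (gmul gG a A) b) (ginv gG A)))) r = Z).
  { rewrite (Peq _ (gmul gG g1 (ginv gG (gmul gG a A)))).
    2:{ unfold g1. gnorm G gG. reflexivity. }
    rewrite <- Pcomp, Hr. unfold Z, q'. rewrite !Pmul, Pcomp.
    rewrite (Peq (gmul gG g1 b) (ginv gG Bb)).
    2:{ unfold g1. gnorm G gG. reflexivity. }
    reflexivity. }
  assert (key : B1 Z = gmul gH (Phi (ginv gG Bb) u) v).
  { assert (Ha' : B0 (gmul gG (gmul gG (ginv gG Bb) (ginv gG b)) Bb) = ginv gG Bb)
      by exact (rb_inv _ gG B0 b RB0).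
    pose proof (Hiii (gmul gG (gmul gG (ginv gG Bb) (ginv gG b)) Bb) p') as E.
    rewrite Ha' in E. fold u in E.
    rewrite (Peq (gmul gG (gmul gG (gmul gG (ginv gG Bb) (ginv gG b)) Bb) (ginv gG Bb)) g1) in E.
    2:{ unfold g1. gnorm G gG. reflexivity. }
    rewrite E. unfold v. rewrite RB1. rewrite <- E. f_equal.
    unfold Z. rewrite Pinv. gnorm H gH. reflexivity. }
  f_equal. fold r. rewrite HZ, key.
  rewrite Pmul, <- !Pcomp, (Pcomp Bb (ginv gG Bb)), (gmulVr G gG), H1. reflexivity.
Qed.
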